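(* Let $n=2k$ with $k\ge 2$. If $lmd(S_n)=2$, then no local metric basis $W$ of $S_n$ consists of one vertex of $C_i$ and one vertex of $C_j$ with $i\neq j$, $i,j\in\{a,b,c,d\}$.
   Context: For $n\ge 3$, $S_n$ is the graph with vertex set $\{a_i,b_i,c_i,d_i : 1\le i\le n\}$ and edge set $\{a_ia_{i+1}, b_ib_{i+1}, c_ic_{i+1}, d_id_{i+1}, a_{i+1}b_i, a_ib_i, b_ic_i, c_id_i : 1\le i\le n\}$, indices taken modulo $n$. For $i\in\{a,b,c,d\}$, $C_i$ is the cycle induced by $i_1,\ldots,i_n$. A vertex $w$ resolves $u,v$ if $d(u,w)\neq d(v,w)$ ($d$ the graph distance). A local resolving set is a vertex set $W$ such that every two adjacent vertices are resolved by some element of $W$; a local metric basis is a local resolving set of minimum cardinality, and $lmd(G)$ is that cardinality. *)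

(* Defs.v *)
From mathcomp Require Import all_boot.
Set Implicit Arguments. Unset Strict Implicit. Unset Printing Implicit Defensive.

(* Vertices of S_n: (l, i) with l : 'I_4 encoding the cycle letter
   (0 = a, 1 = b, 2 = c, 3 = d) and i : 'I_n the 0-based index (mod n). *)
Notation SV n := (ordinal 4 * ordinal n)%type.

Definition Sedge (n : nat) (x y : SV n) : bool :=
  let: (lx, ix) := x in let: (ly, iy) := y in
  [|| (lx == ly) && (nat_of_ord iy == (ix.+1) %% n)
    , [&& nat_of_ord lx == 0, nat_of_ord ly == 1 & nat_of_ord ix == (iy.+1) %% n]
    , [&& nat_of_ord lx == 0, nat_of_ord ly == 1 & ix == iy]
    , [&& nat_of_ord lx == 1, nat_of_ord ly == 2 & ix == iy]
    | [&& nat_of_ord lx == 2, nat_of_ord ly == 3 & ix == iy] ].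

Definition Sadj (n : nat) (x y : SV n) : bool := Sedge x y || Sedge y x.

Fixpoint walk (n : nat) (k : nat) (u v : SV n) : bool :=
  match k with
  | 0 => u == v
  | k'.+1 => [exists w : SV n, walk k' u w && Sadj w v]
  end.

(* graph distance: least k with a walk of length k (S_n is connected, so
   this is attained below #|{: SV n}|) *)
Definition Sdist (n : nat) (u v : SV n) : nat :=
  find (fun k => walk k u v) (iota 0 #|{: SV n}|).

Definition resolves (n : nat) (w u v : SV n) : bool := Sdist u w != Sdist v w.

Definition local_resolving (n : nat) (W : {set SV n}) : bool :=
  [forall u : SV n, forall v : SV n,
     Sadj u v ==> [exists w in W, resolves w u v]].

Definition lmd (n : nat) : nat :=
  find (fun m => [exists W : {set SV n}, local_resolving W && (#|W| == m)])
       (iota 0 #|{: SV n}|.+1).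

Definition local_metric_basis (n : nat) (W : {set SV n}) : bool :=
  local_resolving W && (#|W| == lmd n).

(* Main.v *)
Require Import Defs.
From mathcomp Require Import all_boot.
From mathcomp Require Import zify.
Set Warnings "-notation-overridden".

Section S.
Variable n : nat.
Hypothesis hn : 3 <= n.
Definition posN (l i : nat) := 2*i + minn l 1.
Definition absd (x y : nat) := (x-y)+(y-x).
Definition cdN p q := minn (absd p q) (2*n - absd p q).
Definition DN l1 i1 l2 i2 := (cdN (posN l1 i1) (posN l2 i2) + 1) %/ 2 + absd (l1-1) (l2-1).
Definition edgeN l1 i1 l2 i2 : Prop :=
  (l1 = l2 /\ (i2 = i1 + 1 \/ (i1 + 1 = n /\ i2 = 0)))
  \/ (l1 = 0 /\ l2 = 1 /\ (i1 = i2 + 1 \/ (i2 + 1 = n /\ i1 = 0)))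
  \/ (l1 = 0 /\ l2 = 1 /\ i1 = i2) \/ (l1 = 1 /\ l2 = 2 /\ i1 = i2) \/ (l1 = 2 /\ l2 = 3 /\ i1 = i2).
Definition adjN l1 i1 l2 i2 := edgeN l1 i1 l2 i2 \/ edgeN l2 i2 l1 i1.
Definition stepN q q' := q' = q+1 \/ q' = q+2 \/ q'+2*n = q+1 \/ q'+2*n = q+2.

Lemma cd_step p q q' : p < 2*n -> q < 2*n -> q' < 2*n -> (stepN q q' \/ stepN q' q) ->
  cdN p q' <= cdN p q + 2.
Proof. rewrite /cdN /absd /stepN => *. lia. Qed.

Lemma edge_shape l i l' i' : l <= 3 -> l' <= 3 -> i < n -> i' < n -> edgeN l i l' i' ->
  (posN l i = posN l' i' /\ absd (l-1) (l'-1) <= 1) \/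
  ((stepN (posN l i) (posN l' i') \/ stepN (posN l' i') (posN l i)) /\ l-1 = l'-1).
Proof.
rewrite /edgeN /posN /absd /stepN => *. lia.
Qed.

Lemma lipN l1 i1 l2 i2 l3 i3 : l1 <= 3 -> l2 <= 3 -> l3 <= 3 -> i1 < n -> i2 < n -> i3 < n ->
  adjN l2 i2 l3 i3 -> DN l1 i1 l3 i3 <= DN l1 i1 l2 i2 + 1.
Proof.
move=> h1 h2 h3 h4 h5 h6 hA.
have hs : (posN l2 i2 = posN l3 i3 /\ absd (l2-1) (l3-1) <= 1) \/
  ((stepN (posN l2 i2) (posN l3 i3) \/ stepN (posN l3 i3) (posN l2 i2)) /\ l2-1 = l3-1).
  case: hA => hE; first exact: edge_shape.
  case: (@edge_shape _ _ _ _ h3 h2 h6 h5 hE) => [[-> hb]|[hb ->]]; [left|right]; split => //.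
  - move: hb; rewrite /absd; lia.
  - by case: hb; [right|left].
have hp : forall l i, l <= 3 -> i < n -> posN l i < 2*n by move=> l i *; rewrite /posN; lia.
rewrite /DN; case: hs => [[-> hb]|[hst he]].
- move: hb; rewrite /absd; lia.
- have := @cd_step _ _ _ (hp _ _ h1 h4) (hp _ _ h2 h5) (hp _ _ h3 h6) hst.
  rewrite he /absd; lia.
Qed.
Lemma cd_dec1 p q : p < 2*n -> q < 2*n -> 1 <= cdN p q ->
  (q+1 < 2*n /\ cdN p (q+1) + 1 = cdN p q) \/ (1 <= q /\ cdN p (q-1) + 1 = cdN p q) \/
  (q+1 = 2*n /\ cdN p 0 + 1 = cdN p q) \/ (q = 0 /\ cdN p (2*n-1) + 1 = cdN p q).
Proof.
rewrite /cdN /absd => *.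
case: (leqP p q) => h1.
- case: (leqP (q - p) n) => h2.
  + right; left; lia.
  + case: (ltnP (q+1) (2*n)) => h3; [left; lia| right; right; left; lia].
- case: (leqP (p - q) n) => h2.
  + left; lia.
  + case: (leqP 1 q) => h3; [right; left; lia| right; right; right; lia].
Qed.
Lemma cd_dec2 p q : p < 2*n -> q < 2*n -> 2 <= cdN p q ->
  (q+2 < 2*n /\ cdN p (q+2) + 2 = cdN p q) \/ (2 <= q /\ cdN p (q-2) + 2 = cdN p q) \/
  (2*n <= q+2 /\ cdN p (q+2-2*n) + 2 = cdN p q) \/ (q < 2 /\ cdN p (q+2*n-2) + 2 = cdN p q).
Proof.
rewrite /cdN /absd => *.
case: (leqP p q) => h1.
- case: (leqP (q - p) n) => h2.
  + right; left; lia.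
  + case: (ltnP (q+2) (2*n)) => h3; [left; lia| right; right; left; lia].
- case: (leqP (p - q) n) => h2.
  + left; lia.
  + case: (leqP 2 q) => h3; [right; left; lia| right; right; right; lia].
Qed.
Lemma cd_par p q : p < 2*n -> q < 2*n -> exists t, cdN p q + p + q = 2 * t.
Proof.
rewrite /cdN /absd => *.
case: (leqP ((p-q)+(q-p)) n) => h.
- exists (maxn p q); lia.
- exists (n + minn p q); lia.
Qed.
Lemma cd_pos p q : p < 2*n -> q < 2*n -> p <> q -> 1 <= cdN p q.
Proof. rewrite /cdN /absd => *; lia. Qed.


Lemma adj_sym l i l' i' : adjN l i l' i' -> adjN l' i' l i.
Proof. by rewrite /adjN; case; [right|left]. Qed.
Lemma adj_vert l l' i : l' = l + 1 -> l' <= 3 -> adjN l i l' i.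
Proof. move=> e h; left; rewrite /edgeN; right; right.
case: (ltnP l 1) => h1; [left; lia|right].
case: (ltnP l 2) => h2; [left; lia|right; lia]. Qed.
Lemma adj_cyc l i i' : i' = i + 1 -> adjN l i l i'.
Proof. move=> e; left; left; split => //; left => //. Qed.
Lemma adj_cycw l i i' : i + 1 = n -> i' = 0 -> adjN l i l i'.
Proof. move=> e e'; left; left; split => //; right => //. Qed.
Lemma adj_ab2 i i' : i = i' + 1 -> adjN 0 i 1 i'.
Proof. move=> e; left; right; left; split => //; split => //; left => //. Qed.
Lemma adj_ab2w i i' : i' + 1 = n -> i = 0 -> adjN 0 i 1 i'.
Proof. move=> e e'; left; right; left; split => //; split => //; right => //. Qed.

Tactic Notation "W" constr(l) constr(i) constr(e) tactic3(tac) := exists l, i; rewrite /DN (_ : posN l i = e); [|unfold posN in *; lia];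
  unfold absd, posN in *; split; [lia|split;[lia|split;[tac|lia]]].

Lemma descN l1 i1 l2 i2 m : l1 <= 3 -> l2 <= 3 -> i1 < n -> i2 < n ->
  DN l1 i1 l2 i2 = m.+1 -> exists l i, l <= 3 /\ i < n /\ adjN l i l2 i2 /\ DN l1 i1 l i = m.
Proof.
move=> h1 h2 h3 h4 hD.
have hp : forall l i, l <= 3 -> i < n -> posN l i < 2*n by move=> l i *; rewrite /posN; lia.
have hP := hp _ _ h1 h3; have hQ := hp _ _ h2 h4.
have [t ht] := @cd_par _ _ hP hQ.
move: hD; rewrite /DN => hD.
case: (ltngtP (l1-1) (l2-1)) => hl.
- W (l2-1) i2 (posN l2 i2) (apply: adj_vert; lia).
- case: (leqP 1 l2) => hl2.
  + W (l2+1) i2 (posN l2 i2) (apply: adj_sym; apply: adj_vert; lia).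
  + have c1 : 1 <= cdN (posN l1 i1) (posN l2 i2).
      apply: cd_pos => //; rewrite /posN; lia.
    case: (leqP 2 (cdN (posN l1 i1) (posN l2 i2))) => c2.
    * case: (@cd_dec2 _ _ hP hQ c2) => [[a b]|[[a b]|[[a b]|[a b]]]].
      -- W l2 (i2+1) (posN l2 i2 + 2) (apply: adj_sym; apply: adj_cyc; lia).
      -- W l2 (i2-1) (posN l2 i2 - 2) (apply: adj_cyc; move: a; rewrite /posN; lia).
      -- W l2 0 (posN l2 i2 + 2 - 2*n) (apply: adj_sym; apply: adj_cycw; move: a; rewrite /posN; lia).
      -- W l2 (n-1) (posN l2 i2 + 2*n - 2) (apply: adj_cycw; move: a; rewrite /posN; lia).
    * case: (@cd_dec1 _ _ hP hQ c1) => [[a b]|[[a b]|[[a b]|[a b]]]].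
      -- W 1 i2 (posN l2 i2 + 1) (apply: adj_sym; apply: adj_vert; lia).
      -- W 1 (i2-1) (posN l2 i2 - 1) ((have -> : l2 = 0 by lia); apply: adj_sym; apply: adj_ab2; move: a; rewrite /posN; lia).
      -- exfalso; move: a; rewrite /posN; lia.
      -- W 1 (n-1) (2*n-1) ((have -> : l2 = 0 by lia); apply: adj_sym; apply: adj_ab2w; move: a; rewrite /posN; lia).
- have c1 : 1 <= cdN (posN l1 i1) (posN l2 i2) by move: hD; rewrite /absd; lia.
  case: (leqP 2 (cdN (posN l1 i1) (posN l2 i2))) => c2.
  * case: (@cd_dec2 _ _ hP hQ c2) => [[a b]|[[a b]|[[a b]|[a b]]]].
    -- W l2 (i2+1) (posN l2 i2 + 2) (apply: adj_sym; apply: adj_cyc; lia).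
    -- W l2 (i2-1) (posN l2 i2 - 2) (apply: adj_cyc; move: a; rewrite /posN; lia).
    -- W l2 0 (posN l2 i2 + 2 - 2*n) (apply: adj_sym; apply: adj_cycw; move: a; rewrite /posN; lia).
    -- W l2 (n-1) (posN l2 i2 + 2*n - 2) (apply: adj_cycw; move: a; rewrite /posN; lia).
  * have hl2 : l2 <= 1 by unfold posN in *; lia.
    case: (@cd_dec1 _ _ hP hQ c1) => [[a b]|[[a b]|[[a b]|[a b]]]].
    -- case: (ltnP 0 l2) => hz.
       ++ W 0 (i2+1) (posN l2 i2 + 1) ((have -> : l2 = 1 by lia); apply: adj_ab2; lia).
       ++ W 1 i2 (posN l2 i2 + 1) (apply: adj_sym; apply: adj_vert; lia).
    -- case: (ltnP 0 l2) => hz.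
       ++ W 0 i2 (posN l2 i2 - 1) ((have -> : l2 = 1 by lia); apply: adj_vert; lia).
       ++ W 1 (i2-1) (posN l2 i2 - 1) ((have -> : l2 = 0 by lia); apply: adj_sym; apply: adj_ab2; move: a; rewrite /posN; lia).
    -- case: (ltnP 0 l2) => hz.
       ++ W 0 0 0 ((have -> : l2 = 1 by lia); apply: adj_ab2w; move: a; rewrite /posN; lia).
       ++ exfalso; move: a; rewrite /posN; lia.
    -- case: (ltnP 0 l2) => hz.
       ++ exfalso; move: a; rewrite /posN; lia.
       ++ W 1 (n-1) (2*n-1) ((have -> : l2 = 0 by lia); apply: adj_sym; apply: adj_ab2w; move: a; rewrite /posN; lia).
Qed.
End S.

Set Implicit Arguments. Unset Strict Implicit.

Lemma modS_eq n i j : i < n -> j < n ->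
  (j == i.+1 %% n) = ((j == i.+1) || ((i.+1 == n) && (j == 0))).
Proof.
move=> hi hj; case: (ltngtP i.+1 n) => h.
- rewrite modn_small //; lia.
- lia.
- rewrite h modnn; lia.
Qed.

Lemma ordeq m (a b : 'I_m) : (a == b) = (nat_of_ord a == nat_of_ord b).
Proof. by []. Qed.

Lemma Sedge_iff n (x y : SV n) : Sedge x y <-> edgeN n x.1 x.2 y.1 y.2.
Proof.
case: x => lx ix; case: y => ly iy; rewrite /Sedge /edgeN /=.
have := ltn_ord lx; have := ltn_ord ly; have := ltn_ord ix; have := ltn_ord iy.
rewrite !ordeq !modS_eq // => h1 h2 h3 h4.
move: (nat_of_ord lx) (nat_of_ord ly) (nat_of_ord ix) (nat_of_ord iy) h1 h2 h3 h4 => a b c d h1 h2 h3 h4.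
split.
- case/orP => [/andP [/eqP e1 /orP [/eqP e2 | /andP [/eqP e2 /eqP e3]]] |].
  + left; split => //; left; lia.
  + left; split => //; right; lia.
  case/orP => [/and3P [/eqP e1 /eqP e2 /orP [/eqP e3 | /andP [/eqP e3 /eqP e4]]] |].
  + right; left; split => //; split => //; left; lia.
  + right; left; split => //; split => //; right; lia.
  case/orP => [/and3P [/eqP e1 /eqP e2 /eqP e3] |].
  + by right; right; left.
  case/orP => [/and3P [/eqP e1 /eqP e2 /eqP e3] | /and3P [/eqP e1 /eqP e2 /eqP e3]].
  + by right; right; right; left.
  + by right; right; right; right.
- case => [[-> [->|[e1 ->]]]|[[-> [-> [->|[e1 ->]]]]|[[-> [-> ->]]|[[-> [-> ->]]|[-> [-> ->]]]]]].
  all: try (rewrite addn1 in e1); try (by rewrite addn1 !eqxx); try (by rewrite e1 !eqxx /= ?orbT); try (by rewrite !eqxx /= ?orbT).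
Qed.

Lemma Sadj_iff n (x y : SV n) : Sadj x y <-> adjN n x.1 x.2 y.1 y.2.
Proof.
rewrite /Sadj /adjN; split.
- by case/orP => /Sedge_iff; [left|right].
- by case => /Sedge_iff ->; rewrite ?orbT.
Qed.

Definition Dv n (u v : SV n) := DN n u.1 u.2 v.1 v.2.

Lemma lv3 (l : 'I_4) : (nat_of_ord l) <= 3.
Proof. by have := ltn_ord l; lia. Qed.

Lemma walk_ge n (hn : 2 < n) k (u v : SV n) : walk k u v -> Dv u v <= k.
Proof.
elim: k v => [|k IH] v /=.
- move/eqP => ->; rewrite /Dv /DN /cdN /absd; lia.
- case/existsP => w /andP [hw /Sadj_iff ha].
  have := IH _ hw.
  have := @lipN n hn _ _ _ _ _ _ (lv3 u.1) (lv3 w.1) (lv3 v.1) (ltn_ord u.2) (ltn_ord w.2) (ltn_ord v.2) ha.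
  rewrite /Dv => h1 h2; apply: (leq_trans h1); rewrite addn1 ltnS; exact: h2.
Qed.

Lemma walk_le n (hn : 2 < n) m (u v : SV n) : Dv u v = m -> walk m u v.
Proof.
elim: m v => [|m IH] v /=.
- case: u => lu iu; case: v => lv iv; rewrite /Dv /DN /cdN /absd /posN /= => h.
  have := ltn_ord lu; have := ltn_ord lv; have := ltn_ord iu; have := ltn_ord iv.
  move=> *; apply/eqP; congr pair; apply/val_inj => /=; lia.
- move=> h.
  have [l [i [hl [hi [ha hd]]]]] := @descN n hn _ _ _ _ _ (lv3 u.1) (lv3 v.1) (ltn_ord u.2) (ltn_ord v.2) h.
  have hl' : l < 4 by lia.
  apply/existsP; exists (Ordinal hl', Ordinal hi); apply/andP; split.
  + by apply: IH.
  + by apply/Sadj_iff.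
Qed.

Lemma find_iota (P : pred nat) d N : P d -> (forall k, k < d -> ~~ P k) -> d < N ->
  find P (iota 0 N) = d.
Proof.
move=> hd hk hN.
have -> : N = d + (N - d) by lia.
rewrite iotaD find_cat /=.
have -> : has P (iota 0 d) = false.
  apply/negbTE/hasPn => x; rewrite mem_iota => /andP [_ hx]; apply: hk; lia.
rewrite size_iota add0n.
have -> : N - d = (N - d - 1).+1 by lia.
by rewrite /= hd addn0.
Qed.

Lemma Sdist_eq n (hn : 2 < n) (u v : SV n) : Sdist u v = Dv u v.
Proof.
rewrite /Sdist; apply: find_iota.
- exact: walk_le.
- move=> k hk; apply/negP => /(walk_ge hn); lia.
- rewrite card_prod !card_ord.
  have := ltn_ord u.2; have := ltn_ord v.2; have := ltn_ord u.1; have := ltn_ord v.1.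
  rewrite /Dv /DN /cdN /absd /posN; lia.
Qed.

Lemma modS2 a n : 0 < n -> a < 2 * n -> (a %% n = a /\ a < n) \/ (a %% n + n = a /\ n <= a).
Proof.
move=> h0 h; case: (ltnP a n) => h1.
- by left; rewrite modn_small.
- right; split => //.
  have -> : a = (a - n) + n by lia.
  rewrite modnDr modn_small; lia.
Qed.

Definition A0 : 'I_4 := @Ordinal 4 0 isT.
Definition B1 : 'I_4 := @Ordinal 4 1 isT.

Lemma cd_of n a b c : a < 2*n -> b < 2*n -> c <= n ->
  (a + c = b \/ b + c = a \/ a + c = b + 2*n \/ b + c = a + 2*n) -> cdN n a b = c.
Proof. rewrite /cdN /absd; lia. Qed.
Lemma H_of n a b c h : a < 2*n -> b < 2*n -> c <= n ->
  (a + c = b \/ b + c = a \/ a + c = b + 2*n \/ b + c = a + 2*n) -> (c = 2 * h \/ c + 1 = 2 * h) ->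
  (cdN n a b + 1) %/ 2 = h.
Proof. move=> h1 h2 h3 h4 h5; rewrite (cd_of h1 h2 h3 h4); lia. Qed.
Ltac hdl c := rewrite /posN; apply: (@H_of _ _ _ c); lia.

Lemma key_a n k (en : n = 2 * k) (hk : 2 <= k) (x y : SV n) : nat_of_ord x.1 = 0 -> nat_of_ord y.1 <> 0 ->
  exists u v : SV n, Sadj u v /\ Sdist u x = Sdist v x /\ Sdist u y = Sdist v y.
Proof.
have hn : 2 < n by lia.
have h0 : 0 < n by lia.
case: x => lx p; case: y => ly q /= hx hy.
have hp := ltn_ord p; have hq := ltn_ord q; have hly := ltn_ord ly.
have modx : forall a, a < 2 * n -> exists j, j < n /\ ((j = a /\ a < n) \/ (j + n = a /\ n <= a)).
  move=> a ha; exists (a %% n); split; [exact: ltn_pmod| exact: modS2].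
have [r [hrn m1]] := modx (q + n - p) ltac:(lia).
have [j [hj m2]] := modx (p + k) ltac:(lia).
have [j' [hj' m3]] := modx (p + k - 1) ltac:(lia).
clear modx.
case: (ltnP r k) => hr.
{ exists (A0, Ordinal hj), (B1, Ordinal hj).
  rewrite !Sdist_eq // Sadj_iff /Dv /DN /= hx.
  case: m1 => [[? ?]|[? ?]]; case: m2 => [[? ?]|[? ?]]; try (exfalso; lia).
  all: have e1 : (cdN n (posN 0 j) (posN 0 p) + 1) %/ 2 = k by hdl (n).
  all: have e2 : (cdN n (posN 1 j) (posN 0 p) + 1) %/ 2 = k by hdl (n - 1).
  all: have e3 : (cdN n (posN 0 j) (posN ly q) + 1) %/ 2 = k - r by hdl (n - 2 * r - 1).
  all: have e4 : (cdN n (posN 1 j) (posN ly q) + 1) %/ 2 = k - r by hdl (n - 2 * r).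
  all: rewrite e1 e2 e3 e4; split; [apply: adj_vert; lia|by split]. }
{ exists (A0, Ordinal hj), (B1, Ordinal hj').
  rewrite !Sdist_eq // Sadj_iff /Dv /DN /= hx.
  case: m1 => [[? ?]|[? ?]]; case: m2 => [[? ?]|[? ?]]; case: m3 => [[? ?]|[? ?]]; try (exfalso; lia).
  all: have e1 : (cdN n (posN 0 j) (posN 0 p) + 1) %/ 2 = k by hdl (n).
  all: have e2 : (cdN n (posN 1 j') (posN 0 p) + 1) %/ 2 = k by hdl (n - 1).
  all: have e3 : (cdN n (posN 0 j) (posN ly q) + 1) %/ 2 = r + 1 - k by hdl (2 * r + 1 - n).
  all: have e4 : (cdN n (posN 1 j') (posN ly q) + 1) %/ 2 = r + 1 - k by hdl (2 * r + 2 - n).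
  all: rewrite e1 e2 e3 e4; (split; [|by split]).
  all: first [apply: adj_ab2; lia | apply: adj_ab2w; lia]. }
Qed.

Lemma key_b n k (en : n = 2 * k) (hk : 2 <= k) (x y : SV n) : nat_of_ord x.1 <> 0 -> nat_of_ord y.1 <> 0 ->
  exists u v : SV n, Sadj u v /\ Sdist u x = Sdist v x /\ Sdist u y = Sdist v y.
Proof.
have hn : 2 < n by lia.
have h0 : 0 < n by lia.
case: x => lx p; case: y => ly q /= hx hy.
have hp := ltn_ord p; have hq := ltn_ord q; have hly := ltn_ord ly; have hlx := ltn_ord lx.
have modx : forall a, a < 2 * n -> exists j, j < n /\ ((j = a /\ a < n) \/ (j + n = a /\ n <= a)).
  move=> a ha; exists (a %% n); split; [exact: ltn_pmod| exact: modS2].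
have [r [hrn m1]] := modx (q + n - p) ltac:(lia).
have [j [hj m2]] := modx (p + 1) ltac:(lia).
have [j' [hj' m3]] := modx (p + n - 1) ltac:(lia).
clear modx.
case: (ltngtP r k) => hr.
{ exists (A0, p), (B1, Ordinal hj').
  rewrite !Sdist_eq // Sadj_iff /Dv /DN /=.
  case: m1 => [[? ?]|[? ?]]; case: m3 => [[? ?]|[? ?]]; try (exfalso; lia).
  all: have e1 : (cdN n (posN 0 p) (posN lx p) + 1) %/ 2 = 1 by hdl (1).
  all: have e2 : (cdN n (posN 1 j') (posN lx p) + 1) %/ 2 = 1 by hdl (2).
  all: have e3 : (cdN n (posN 0 p) (posN ly q) + 1) %/ 2 = r + 1 by hdl (2 * r + 1).
  all: have e4 : (cdN n (posN 1 j') (posN ly q) + 1) %/ 2 = r + 1 by hdl (2 * r + 2).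
  all: rewrite e1 e2 e3 e4; (split; [|by split]).
  all: first [apply: adj_ab2; lia | apply: adj_ab2w; lia]. }
{ exists (A0, Ordinal hj), (B1, Ordinal hj).
  rewrite !Sdist_eq // Sadj_iff /Dv /DN /=.
  case: m1 => [[? ?]|[? ?]]; case: m2 => [[? ?]|[? ?]]; try (exfalso; lia).
  all: have e1 : (cdN n (posN 0 j) (posN lx p) + 1) %/ 2 = 1 by hdl (1).
  all: have e2 : (cdN n (posN 1 j) (posN lx p) + 1) %/ 2 = 1 by hdl (2).
  all: have e3 : (cdN n (posN 0 j) (posN ly q) + 1) %/ 2 = n - r + 1 by hdl (2 * n - 2 * r + 1).
  all: have e4 : (cdN n (posN 1 j) (posN ly q) + 1) %/ 2 = n - r + 1 by hdl (2 * n - 2 * r + 2).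
  all: rewrite e1 e2 e3 e4; (split; [|by split]).
  all: apply: adj_vert; lia. }
{ exists (A0, p), (A0, Ordinal hj).
  rewrite !Sdist_eq // Sadj_iff /Dv /DN /=.
  case: m1 => [[? ?]|[? ?]]; case: m2 => [[? ?]|[? ?]]; try (exfalso; lia).
  all: have e1 : (cdN n (posN 0 p) (posN lx p) + 1) %/ 2 = 1 by hdl (1).
  all: have e2 : (cdN n (posN 0 j) (posN lx p) + 1) %/ 2 = 1 by hdl (1).
  all: have e3 : (cdN n (posN 0 p) (posN ly q) + 1) %/ 2 = k by hdl (n - 1).
  all: have e4 : (cdN n (posN 0 j) (posN ly q) + 1) %/ 2 = k by hdl (n - 1).
  all: rewrite e1 e2 e3 e4; (split; [|by split]).
  all: first [apply: adj_cyc; lia | apply: adj_cycw; lia]. }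
Qed.

Unset Implicit Arguments.

Theorem lemma3p4 (k : nat) (hk : 2 <= k) (hl : lmd (2 * k) = 2) :
  forall W : {set SV (2 * k)}, local_metric_basis W ->
    ~ (exists x y : SV (2 * k), W = [set x; y] /\ x.1 != y.1).
Proof.
move=> W /andP [hres _] [x [y [hW hxy]]].
have hxy' : nat_of_ord x.1 <> nat_of_ord y.1.
  by move=> h; move: hxy; rewrite (val_inj h) eqxx.
have [u [v [ha [e1 e2]]]] : exists u v : SV (2 * k),
    Sadj u v /\ Sdist u x = Sdist v x /\ Sdist u y = Sdist v y.
  case: (eqVneq (nat_of_ord x.1) 0) => h1.
  - apply: (@key_a (2 * k) k erefl hk x y h1); lia.
  - case: (eqVneq (nat_of_ord y.1) 0) => h2.
    + have [u [v [a [b c]]]] := @key_a (2 * k) k erefl hk y x h2 (elimN eqP h1).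
      by exists u, v.
    + exact: (@key_b (2 * k) k erefl hk x y (elimN eqP h1) (elimN eqP h2)).
move/forallP: hres => /(_ u) /forallP /(_ v) /implyP /(_ ha) /existsP [w /andP [hw hr]].
move: hw hr; rewrite hW !inE => /orP [] /eqP ->; by rewrite /resolves ?e1 ?e2 eqxx.
Qed.
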